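(* Let $G=([N],\mathcal{E})$ be an undirected graph, $\sigma=(\sigma_1,\dots,\sigma_N)\in(0,1)^N$, $\sigma_m=\min_i\sigma_i$, $c>0$ and $q\in(1-\sigma_m,1)$, and let $C\subset[N]$ be a set of compromised clients. Then the distributed mechanism is $\epsilon$-differentially private with respect to the uncompromised clients, with $\epsilon=\frac{q}{c(q+\sigma_m-1)}$: for every $\delta\ge0$, every pair $\theta(0),\theta'(0)\in\mathbb{R}^N$ that differ only in one coordinate $k\notin C$ with $|\theta_k(0)-\theta'_k(0)|\le\delta$, and every measurable set $\mathit{Obs}$ of observation sequences, $$\Pr[\text{observation}\in\mathit{Obs}\mid\theta(0)]\le e^{\epsilon\delta}\Pr[\text{observation}\in\mathit{Obs}\mid\theta'(0)].$$
   Context: Laplace distribution $Lap(b)$: density $\frac{1}{2b}e^{-|x|/b}$. $N(i)=\{j:(i,j)\in\mathcal{E}\}$ is the neighbor set of $i$. Distributed mechanism with parameters $\sigma\in(0,1)^N$, $c>0$, $q\in(0,1)$: each client $i$ has states $\theta_i(t),y_i(t)$ with real initial value $\theta_i(0)$. At each round $t=0,1,2,\dots$: (i) client $i$ sends $x_i(t)=\theta_i(t)+\eta_i(t)$ to every $j\in N(i)$, where the $\eta_i(t)$ ($i\in[N],t\ge0$) are mutually independent with $\eta_i(t)\sim Lap(cq^t)$; (ii) client $i$ sets $y_i(t)=\frac{1}{|N(i)|+1}\sum_{j\in N(i)\cup\{i\}}x_j(t)$; (iii) client $i$ sets $\theta_i(t+1)=(1-\sigma_i)\theta_i(t)+\sigma_i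 y_i(t)$. The adversary's observation is the sequence of all messages $(x_i(t))_{i\in[N],t\ge0}$ together with the internal states $(\theta_j(t),y_j(t))_{t\ge0}$ of every compromised client $j\in C$. *)

(* Defs.v *)
From HB Require Import structures.
From mathcomp Require Import all_boot all_order all_algebra.
From mathcomp Require Import all_classical all_reals all_analysis.
Set Implicit Arguments. Unset Strict Implicit. Unset Printing Implicit Defensive.
Import Order.TTheory GRing.Theory Num.Theory.
Local Open Scope classical_set_scope.
Local Open Scope ring_scope.

Section DefsSec.
Variable R : realType.

Definition laplace_law (b : R) (B : set R) : \bar R :=
  (\int[@lebesgue_measure R]_(x in B) ((2 * b)^-1 * expR (- `|x| / b))%:E)%E.

Definition mutually_independent (d : measure_display) (T : measurableType d)
  (P : probability T R) (I : eqType) (X : I -> T -> R) : Prop :=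
  forall (S : seq I), uniq S ->
  forall (B : I -> set R), (forall i, measurable (B i)) ->
  P (\big[setI/setT]_(i <- S) (X i @^-1` B i)) =
  (\prod_(i <- S) P (X i @^-1` B i))%E.

Definition undirected_graph (N : nat) (e : rel 'I_N) : Prop :=
  symmetric e /\ irreflexive e.

Definition nbrs (N : nat) (e : rel 'I_N) (i : 'I_N) : {set 'I_N} :=
  [set j | e i j].

Definition msg (N : nat) (th eta : 'I_N -> R) (i : 'I_N) : R := th i + eta i.

Definition yval (N : nat) (e : rel 'I_N) (th eta : 'I_N -> R) (i : 'I_N) : R :=
  (#|nbrs e i|.+1)%:R^-1 *
  (\sum_(j in nbrs e i :|: [set i]) msg th eta j).

Fixpoint theta (N : nat) (e : rel 'I_N) (sigma : 'I_N -> R)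
  (th0 : 'I_N -> R) (eta : nat -> 'I_N -> R) (t : nat) : 'I_N -> R :=
  match t with
  | 0 => th0
  | t'.+1 => fun i =>
      (1 - sigma i) * theta e sigma th0 eta t' i
      + sigma i * yval e (theta e sigma th0 eta t') (eta t') i
  end.

(* Observation indices at each round: all messages x_i(t), and the internal
   states theta_j(t), y_j(t) of compromised clients j in C. *)
Definition obs_index (N : nat) (C : {set 'I_N}) : Type :=
  ('I_N + {j : 'I_N | j \in C} + {j : 'I_N | j \in C})%type.

Definition observation (N : nat) (e : rel 'I_N) (sigma : 'I_N -> R)
  (C : {set 'I_N}) (th0 : 'I_N -> R) (eta : nat -> 'I_N -> R) :
  nat -> obs_index C -> R :=
  fun t a =>
    match a with
    | inl (inl i) => msg (theta e sigma th0 eta t) (eta t) i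
    | inl (inr j) => theta e sigma th0 eta t (proj1_sig j)
    | inr j => yval e (theta e sigma th0 eta t) (eta t) (proj1_sig j)
    end.

Definition cylinder_gen (A : Type) : set (set (nat -> A -> R)) :=
  [set S | exists t a (B : set R), measurable B /\ S = [set f | B (f t a)]].

Definition obs_measurable (A : Type) (Obs : set (nat -> A -> R)) : Prop :=
  smallest (sigma_algebra setT) (@cylinder_gen A) Obs.

Definition sigma_min (N : nat) (sigma : 'I_N -> R) : R :=
  \big[Num.min/1]_(i < N) sigma i.

End DefsSec.

(* Main.v *)
Require Import Defs.
From HB Require Import structures.
From mathcomp Require Import all_boot all_order all_algebra.
From mathcomp Require Import all_classical all_reals all_analysis.
From mathcomp Require Import measurable_realfun.
From mathcomp Require Import ring lra.
Import Order.TTheory GRing.Theory Num.Theory.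
Local Open Scope classical_set_scope.
Local Open Scope ring_scope.

Section Lap.
Context {R : realType}.
Local Notation mu := (@lebesgue_measure R).

Lemma mshift (s : R) : measurable_fun setT (fun x : R => x + s).
Proof. by apply: measurable_funD => //; exact: measurable_cst. Qed.

Local Hint Extern 0 (measurable_fun _ (fun x => x + _)) => solve [exact: mshift] : core.
Local Hint Extern 0 (measurable_fun _ (+%R^~ _)) => solve [exact: mshift] : core.

Lemma lebesgue_measure_shift (s : R) (A : set R) : measurable A ->
  pushforward mu ((fun x => x + s) : _ -> measurableTypeR R) A = mu A.
Proof.
move=> mA; apply/esym/lebesgue_measure_unique => //=.
move=> _ [[a b]] _ <-; rewrite /pushforward.
have -> : (fun x => x + s) @^-1` `]a, b]%classic = `](a - s), (b - s)]%classic.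
  apply/seteqP; split => x /=; rewrite !in_itv /= => /andP[h1 h2];
  apply/andP; split.
  - by rewrite ltrBlDr.
  - by rewrite lerBrDr.
  - by rewrite -ltrBlDr.
  - by rewrite -lerBrDr.
rewrite !lebesgue_measure_itv/= !lte_fin ltrD2r; case: ifP => // _.
by rewrite -!EFinD; congr (_%:E); ring.
Qed.

Lemma mlapd (b s : R) : measurable_fun setT (fun x : R => (2*b)^-1 * expR (- `|x - s| / b)).
Proof.
apply: measurable_funM; first exact: measurable_cst.
apply: measurableT_comp => //.
apply: measurable_funM; last exact: measurable_cst.
apply: measurable_funN; apply: measurableT_comp => //.
Qed.

Lemma laplace_shift (b s : R) (A : set R) : 0 < b -> measurable A ->
  (laplace_law b [set x | A (x + s)%R] <= (expR (`|s| / b))%:E * laplace_law b A)%E.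
Proof.
move=> b0 mA; rewrite /laplace_law.
have mA' : measurable [set x | A (x + s)].
  by rewrite -[X in measurable X]setTI; exact: (mshift s).
have -> : (\int[mu]_(x in [set x | A (x + s)%R]) ((2 * b)^-1 * expR (- `|x| / b))%R%:E =
   \int[mu]_(x in (fun x => x+s)%R @^-1` A) (((fun y => ((2 * b)^-1 * expR (- `|y - s| / b))%R%:E) \o (fun x => x+s)%R) x))%E.
  by apply: eq_integral => x _ /=; rewrite addrK.
rewrite -(@ge0_integral_pushforward _ _ (measurableTypeR R) (measurableTypeR R) R (fun x : R => x + s) (mshift s) mu) //; last 2 first.
- by apply/measurable_EFinP; apply: measurable_funTS; exact: mlapd.
- by move=> y _; rewrite lee_fin mulr_ge0 ?expR_ge0 // invr_ge0 mulr_ge0 // ltW.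
rewrite (@eq_measure_integral _ _ _ _ mu); last first.
  by move=> B mB _; exact: lebesgue_measure_shift.
have m0 : measurable_fun A (fun x => ((2*b)^-1 * expR (- `|x|/b))%:E).
  apply/measurable_EFinP; apply: measurable_funTS.
  by have := mlapd b 0; under eq_fun do rewrite subr0.
have ms : measurable_fun A (fun x => ((2*b)^-1 * expR (- `|x - s|/b))%:E).
  by apply/measurable_EFinP; apply: measurable_funTS; exact: mlapd.
have p0 : forall x, A x -> (0 <= ((2*b)^-1 * expR (- `|x|/b))%:E)%E.
  by move=> y _; rewrite lee_fin mulr_ge0 ?expR_ge0 // invr_ge0 mulr_ge0 // ltW.
have ps : forall x, A x -> (0 <= ((2*b)^-1 * expR (- `|x - s|/b))%:E)%E.
  by move=> y _; rewrite lee_fin mulr_ge0 ?expR_ge0 // invr_ge0 mulr_ge0 // ltW.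
rewrite -ge0_integralZl ?lee_fin ?expR_ge0 //.
apply: ge0_le_integral => //.
  apply: emeasurable_funM => //; exact: measurable_cst.
move=> y _; rewrite lee_fin mulrCA ler_pM2l ?invr_gt0 ?mulr_gt0 //.
rewrite -expRD ler_expR -mulrDl ler_pM2r ?invr_gt0 //.
have h := ler_normD s (y - s); rewrite addrCA subrr addr0 in h; lra.
Qed.
End Lap.

Section Sat.
Context {R : realType} {U : eqType}.

Fixpoint sat (L : seq (U * set R)) (f : U -> R) : Prop :=
  match L with [::] => True | p :: L' => p.2 (f p.1) /\ sat L' f end.

Fixpoint Cset (L : seq (U * set R)) (u : U) : set R :=
  match L with [::] => setT | p :: L' => (if p.1 == u then p.2 else setT) `&` Cset L' u end.

Fixpoint mL (L : seq (U * set R)) : Prop :=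
  match L with [::] => True | p :: L' => measurable p.2 /\ mL L' end.

Definition vec (L : seq (U * set R)) (f : U -> R) : seq bool :=
  map (fun p => `[< p.2 (f p.1) >]) L.

Lemma Cset_meas L u : mL L -> measurable (Cset L u).
Proof.
elim: L => [|p L IH] /= => [_|[mp mL']]; first exact: measurableT.
by apply: measurableI; [case: ifP|exact: IH].
Qed.

Lemma Cset_notin L u : u \notin map fst L -> Cset L u = setT.
Proof.
elim: L => [|p L IH] //=; rewrite in_cons negb_or => /andP[h1 h2].
by rewrite IH // eq_sym (negbTE h1) setIT.
Qed.

Lemma satE L f : sat L f <-> (forall u, u \in undup (map fst L) -> Cset L u (f u)).
Proof.
under eq_forall do rewrite mem_undup.
elim: L => [|p L IH] /=; first by split.
split.
- move=> [h1 /IH h2] u; rewrite in_cons => /orP[/eqP ->|hu].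
    split; first by rewrite eqxx.
    case: (boolP (p.1 \in map fst L)) => [hin|hnin]; first exact: h2.
    by rewrite Cset_notin.
  split; last exact: h2.
  by case: ifP => // /eqP <-.
- move=> h; split.
    by have := h p.1; rewrite in_cons eqxx /= => /(_ isT) [].
  by apply/IH => u hu; have := h u; rewrite in_cons hu orbT => /(_ isT) [].
Qed.

End Sat.

Lemma bigsetI_forall {T : Type} {U : eqType} (S : seq U) (F : U -> set T) w :
  (\big[setI/setT]_(u <- S) F u) w <-> (forall u, u \in S -> F u w).
Proof.
elim: S => [|u S IH]; rewrite ?big_nil ?big_cons /=; first by split.
split.
- by move=> [h1 /IH h2] v; rewrite in_cons => /orP[/eqP ->|hv] //; exact: h2.
- move=> h; split; first by apply: h; rewrite in_cons eqxx.
  by apply/IH => v hv; apply: h; rewrite in_cons hv orbT.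
Qed.

Lemma prod_le {R : realType} {U : Type} (S : seq U) (x y : U -> \bar R) (a : U -> R) :
  (forall u, (0 <= y u)%E) -> (forall u, (0 <= x u)%E) ->
  (forall u, (x u <= (expR (a u))%:E * y u)%E) ->
  (\prod_(u <- S) x u <= (expR (\sum_(u <- S) a u))%:E * \prod_(u <- S) y u)%E.
Proof.
move=> y0 x0 xy; elim: S => [|u S IH]; first by rewrite !big_nil expR0 mul1e.
rewrite !big_cons expRD EFinM muleACA.
apply: lee_pmul => //; first exact: prode_ge0.
Qed.

Section Core.
Context {R : realType} {d : measure_display} {T : measurableType d}
  (P : probability T R) {U : eqType}.
Variables (eta : U -> T -> R) (b s : U -> R) (Lb : R).
Hypothesis meta : forall u, measurable_fun setT (eta u).
Hypothesis indep : mutually_independent P eta.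
Hypothesis law : forall u (B : set R), measurable B ->
  P (eta u @^-1` B) = laplace_law (b u) B.
Hypothesis bpos : forall u, 0 < b u.
Hypothesis sumb : forall S, uniq S -> \sum_(u <- S) `|s u| / b u <= Lb.

Definition Zs (w : T) : U -> R := fun u => eta u w + s u.
Definition Z0 (w : T) : U -> R := fun u => eta u w.

Lemma prod_sat (Bf : U -> set R) (S : seq U) : uniq S -> (forall u, measurable (Bf u)) ->
  P [set w | forall u, u \in S -> Bf u (eta u w)] = (\prod_(u <- S) P (eta u @^-1` Bf u))%E.
Proof.
move=> uS mB; rewrite -indep //; congr (P _).
by apply/seteqP; split => w /=; rewrite bigsetI_forall.
Qed.

Lemma GR L : mL L ->
  (P (Zs @^-1` sat L) <= (expR Lb)%:E * P (Z0 @^-1` sat L))%E.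
Proof.
move=> mLL; set S := undup (map fst L).
have -> : Zs @^-1` sat L = [set w | forall u, u \in S -> [set x | Cset L u (x + s u)] (eta u w)].
  by apply/seteqP; split => w /=; rewrite satE.
have -> : Z0 @^-1` sat L = [set w | forall u, u \in S -> Cset L u (eta u w)].
  by apply/seteqP; split => w /=; rewrite satE.
have mC u : measurable (Cset L u) by exact: Cset_meas.
have mCs u : measurable [set x | Cset L u (x + s u)].
  by rewrite -[X in measurable X]setTI; exact: (mshift (s u)).
rewrite (prod_sat (fun u => [set x | Cset L u (x + s u)])) ?undup_uniq // prod_sat ?undup_uniq //.
apply: (le_trans (prod_le _ _ (fun u => P (eta u @^-1` Cset L u)) (fun u => `|s u| / b u) _ _ _)).
- by move=> u; exact: measure_ge0.
- by move=> u; exact: measure_ge0.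
- by move=> u; rewrite !law //; exact: laplace_shift.
apply: lee_wpmul2r; first exact: prode_ge0.
by rewrite lee_fin ler_expR; apply: sumb; exact: undup_uniq.
Qed.


Lemma meas_pre (zeta : T -> U -> R) u (A : set R) :
  measurable_fun setT (fun w => zeta w u) -> measurable A ->
  measurable ((fun w => zeta w u) @^-1` A).
Proof. by move=> mz mA; rewrite -[X in measurable X]setTI; exact: mz. Qed.

Lemma sat_meas (zeta : T -> U -> R) (mz : forall u, measurable_fun setT (fun w => zeta w u)) L :
  mL L -> measurable (zeta @^-1` sat L).
Proof.
elim: L => [|p L IH] /=; first by move=> _; exact: measurableT.
move=> [mp mL'].
have -> : zeta @^-1` sat (p :: L) = (fun w => zeta w p.1) @^-1` p.2 `&` zeta @^-1` sat L by [].
by apply: measurableI; [exact: meas_pre|exact: IH].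
Qed.

Definition X (L0 L : seq (U * set R)) (g : seq bool -> bool) : set (U -> R) :=
  [set f | sat L0 f /\ g (vec L f)].

Lemma X_split p L0 L g : X L0 (p :: L) g =
  X (p :: L0) L (fun v => g (true :: v)) `|` X ((p.1, ~` p.2) :: L0) L (fun v => g (false :: v)).
Proof.
apply/seteqP; split => f /=; rewrite /X /vec /=.
- move=> [h0 hg]; case: (pselect (p.2 (f p.1))) => h.
    by left; split => //; move: hg; rewrite asboolT.
  by right; split => //; move: hg; rewrite asboolF.
- case => [[[h1 h0] hg]|[[h1 h0] hg]]; split => //.
    by rewrite asboolT.
  by rewrite asboolF.
Qed.

Lemma X_disj p L0 L g g' :
  X (p :: L0) L g `&` X ((p.1, ~` p.2) :: L0) L g' = set0.
Proof. by apply/seteqP; split => f //= [[[h1 _] _] [[h2 _] _]]. Qed.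

Lemma X_meas (zeta : T -> U -> R) (mz : forall u, measurable_fun setT (fun w => zeta w u)) L L0 g :
  mL L0 -> mL L -> measurable (zeta @^-1` X L0 L g).
Proof.
elim: L L0 g => [|p L IH] L0 g mL0 /=.
  move=> _; case E: (g [::]).
    rewrite (_ : zeta @^-1` X L0 [::] g = zeta @^-1` sat L0); first exact: sat_meas.
    by apply/seteqP; split => w /=; rewrite /X /vec /= E; [by case|by move=> h; split].
  rewrite (_ : zeta @^-1` X L0 [::] g = set0); first exact: measurable0.
  by apply/seteqP; split => w //=; rewrite /X /vec /= E => -[].
move=> [mp mL']; rewrite X_split preimage_setU; apply: measurableU.
  by apply: IH.
by apply: IH => //=; split => //; exact: measurableC.
Qed.

Lemma mZs u : measurable_fun setT (fun w => Zs w u).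
Proof. by apply: measurable_funD => //; exact: measurable_cst. Qed.

Lemma mZ0 u : measurable_fun setT (fun w => Z0 w u).
Proof. exact: meta. Qed.

Lemma X_ineq L L0 g : mL L0 -> mL L ->
  (P (Zs @^-1` X L0 L g) <= (expR Lb)%:E * P (Z0 @^-1` X L0 L g))%E.
Proof.
elim: L L0 g => [|p L IH] L0 g mL0 /=.
  move=> _; case E: (g [::]).
    rewrite (_ : Zs @^-1` X L0 [::] g = Zs @^-1` sat L0); last first.
      by apply/seteqP; split => w /=; rewrite /X /vec /= E; [by case|by move=> h; split].
    rewrite (_ : Z0 @^-1` X L0 [::] g = Z0 @^-1` sat L0); last first.
      by apply/seteqP; split => w /=; rewrite /X /vec /= E; [by case|by move=> h; split].
    exact: GR.
  rewrite (_ : Zs @^-1` X L0 [::] g = set0); last first.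
    by apply/seteqP; split => w //=; rewrite /X /vec /= E => -[].
  rewrite (_ : Z0 @^-1` X L0 [::] g = set0); last first.
    by apply/seteqP; split => w //=; rewrite /X /vec /= E => -[].
  by rewrite measure0 mule0.
move=> [mp mL']; rewrite X_split !preimage_setU.
have mL1 : mL (p :: L0) by [].
have mL2 : mL ((p.1, ~` p.2) :: L0) by split => //; exact: measurableC.
have d1 := X_disj p L0 L (fun v => g (true :: v)) (fun v => g (false :: v)).
have ms1 := X_meas _ mZs L _ (fun v => g (true :: v)) mL1 mL'.
have ms2 := X_meas _ mZs L _ (fun v => g (false :: v)) mL2 mL'.
have m01 := X_meas _ mZ0 L _ (fun v => g (true :: v)) mL1 mL'.
have m02 := X_meas _ mZ0 L _ (fun v => g (false :: v)) mL2 mL'.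
rewrite !measureU //; first last.
- by rewrite -preimage_setI d1 preimage_set0.
- by rewrite -preimage_setI d1 preimage_set0.
rewrite ge0_muleDr; [|exact: measure_ge0|exact: measure_ge0].
by apply: leeD; apply: IH.
Qed.


Definition Rg : set (set (U -> R)) :=
  [set B | exists L, mL L /\ exists g : seq bool -> bool, B = [set f | g (vec L f)]].

Definition Mcl : set (set (U -> R)) :=
  [set B | [/\ measurable (Zs @^-1` B), measurable (Z0 @^-1` B) &
     (P (Zs @^-1` B) <= (expR Lb)%:E * P (Z0 @^-1` B))%E]].

Lemma Rg_Mcl : Rg `<=` Mcl.
Proof.
move=> B [L [mLL [g ->]]].
have -> : [set f | g (vec L f)] = X [::] L g.
  by apply/seteqP; split => f /=; rewrite /X /=; [move=> h; split|case].
split.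
- exact: X_meas _ mZs _ _ _ _ _.
- exact: X_meas _ mZ0 _ _ _ _ _.
- exact: X_ineq.
Qed.

Lemma mL_cat (L1 L2 : seq (U * set R)) : mL L1 -> mL L2 -> mL (L1 ++ L2).
Proof. by elim: L1 => [|p L IH] //= [mp mL] m2; split => //; exact: IH. Qed.

Lemma vec_cat (L1 L2 : seq (U * set R)) f : vec (L1 ++ L2) f = vec L1 f ++ vec L2 f.
Proof. exact: map_cat. Qed.

Lemma Rg_ring : setring Rg.
Proof.
split.
- exists (@nil (U * set R)); split => //; exists (fun _ => false).
  by apply/seteqP; split => f.
- move=> A B [LA [mA [gA ->]]] [LB [mB [gB ->]]].
  exists (LA ++ LB); split; first exact: mL_cat.
  exists (fun v => gA (take (size LA) v) || gB (drop (size LA) v)).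
  apply/seteqP; split => f /=; rewrite vec_cat;
    rewrite -[size LA](size_map (fun p => `[< p.2 (f p.1) >])) take_size_cat ?drop_size_cat //.
  + by case => h; apply/orP; [left|right].
  + by move/orP.
- move=> A B [LA [mA [gA ->]]] [LB [mB [gB ->]]].
  exists (LA ++ LB); split; first exact: mL_cat.
  exists (fun v => gA (take (size LA) v) && ~~ gB (drop (size LA) v)).
  apply/seteqP; split => f /=; rewrite vec_cat;
    rewrite -[size LA](size_map (fun p => `[< p.2 (f p.1) >])) take_size_cat ?drop_size_cat //.
  + by case => h1 /negP h2; apply/andP.
  + by case/andP => h1 /negP h2.
Qed.


Lemma Mcl_monotone : monotone Mcl.
Proof.
split.
- move=> F ndF MF; rewrite /Mcl /= !preimage_bigcup.
  have mS n : measurable (Zs @^-1` F n) by case: (MF n).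
  have m0 n : measurable (Z0 @^-1` F n) by case: (MF n).
  have ndS : nondecreasing_seq (fun n => Zs @^-1` F n).
    move=> n m nm; have /subsetPset h := ndF _ _ nm; apply/subsetPset => w; exact: h.
  have nd0 : nondecreasing_seq (fun n => Z0 @^-1` F n).
    move=> n m nm; have /subsetPset h := ndF _ _ nm; apply/subsetPset => w; exact: h.
  split; try exact: bigcupT_measurable.
  have h1 := nondecreasing_cvg_mu (mu := P) (F := fun n => Zs @^-1` F n) mS (bigcupT_measurable _ mS) ndS.
  have h2 := nondecreasing_cvg_mu (mu := P) (F := fun n => Z0 @^-1` F n) m0 (bigcupT_measurable _ m0) nd0.
  have h3 := @cvgeZl _ _ _ _ _ (expR Lb)%:E isT h2.
  rewrite -(cvg_lim _ h1) // -(cvg_lim _ h3) //.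
  apply: lee_lim; [by apply/cvg_ex; eexists; exact: h1|by apply/cvg_ex; eexists; exact: h3|].
  by apply: nearW => n /=; case: (MF n).
- move=> F niF MF; rewrite /Mcl /= !preimage_bigcap.
  have mS n : measurable (Zs @^-1` F n) by case: (MF n).
  have m0 n : measurable (Z0 @^-1` F n) by case: (MF n).
  have niS : nonincreasing_seq (fun n => Zs @^-1` F n).
    move=> n m nm; have /subsetPset h := niF _ _ nm; apply/subsetPset => w; exact: h.
  have ni0 : nonincreasing_seq (fun n => Z0 @^-1` F n).
    move=> n m nm; have /subsetPset h := niF _ _ nm; apply/subsetPset => w; exact: h.
  split; try exact: bigcapT_measurable.
  have fS : (P (Zs @^-1` F 0%N) < +oo)%E.
    by rewrite (le_lt_trans (probability_le1 _ _)) ?ltry.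
  have f0 : (P (Z0 @^-1` F 0%N) < +oo)%E.
    by rewrite (le_lt_trans (probability_le1 _ _)) ?ltry.
  have h1 := nonincreasing_cvg_mu (mu := P) (F := fun n => Zs @^-1` F n) fS mS (bigcapT_measurable mS) niS.
  have h2 := nonincreasing_cvg_mu (mu := P) (F := fun n => Z0 @^-1` F n) f0 m0 (bigcapT_measurable m0) ni0.
  have h3 := @cvgeZl _ _ _ _ _ (expR Lb)%:E isT h2.
  rewrite -(cvg_lim _ h1) // -(cvg_lim _ h3) //.
  apply: lee_lim; [by apply/cvg_ex; eexists; exact: h1|by apply/cvg_ex; eexists; exact: h3|].
  by apply: nearW => n /=; case: (MF n).
Qed.

Definition G0 : set (set (U -> R)) :=
  [set B | exists u (A : set R), measurable A /\ B = [set f | A (f u)]].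

Lemma core B : <<s G0>> B -> (P (Zs @^-1` B) <= (expR Lb)%:E * P (Z0 @^-1` B))%E.
Proof.
move=> hB.
have h1 : <<sr Rg>> `<=` Mcl := monotone_setring_sub_g_sigma_ring Mcl_monotone Rg_ring Rg_Mcl.
have RgT : Rg setT.
  exists (@nil (U * set R)); split => //; exists (fun _ => true).
  by apply/seteqP; split => f.
have h2 : <<s G0>> `<=` <<sr Rg>>.
  apply: smallest_sub.
    have [s0 sD sU] := smallest_sigma_ring Rg; split => //.
    by move=> A hA; apply: sD => //; exact: sub_g_sigma_ring.
  move=> A [u [A0 [mA ->]]]; apply: sub_g_sigma_ring.
  exists [:: (u, A0)]; split; first by split.
  exists (head false); apply/seteqP; split => f /=; rewrite /vec /=.
    by move=> h; apply/asboolP.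
  by move/asboolP.
by case: (h1 _ (h2 _ hB)).
Qed.

End Core.

Section Shift.
Context {R : realType} (N : nat) (e : rel 'I_N) (sigma : 'I_N -> R) (C : {set 'I_N}).
Variables (th0 th0' : 'I_N -> R) (k : 'I_N).
Hypothesis hth : forall i, i != k -> th0 i = th0' i.

Definition sh (t : nat) (i : 'I_N) : R :=
  if i == k then (1 - sigma k) ^+ t * (th0 k - th0' k) else 0.

Lemma theta_shift (eta : nat -> 'I_N -> R) t i :
  theta e sigma th0' (fun t i => eta t i + sh t i) t i = theta e sigma th0 eta t i - sh t i.
Proof.
elim: t i => [|t IH] i /=.
  rewrite /sh; case: eqP => [->|/eqP hi]; first by rewrite expr0 mul1r; ring.
  by rewrite hth // subr0.
have hy : yval e (theta e sigma th0' (fun t i => eta t i + sh t i) t) (fun i => eta t i + sh t i) i =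
          yval e (theta e sigma th0 eta t) (eta t) i.
  rewrite /yval; congr (_ * _); apply: eq_bigr => j _; rewrite /msg IH /=; ring.
rewrite hy IH /sh; case: eqP => [->|_]; last by ring.
by rewrite exprS; ring.
Qed.

Lemma msg_shift (eta : nat -> 'I_N -> R) t j :
  msg (theta e sigma th0' (fun t i => eta t i + sh t i) t) (fun i => eta t i + sh t i) j =
  msg (theta e sigma th0 eta t) (eta t) j.
Proof. by rewrite /msg theta_shift; ring. Qed.

Lemma obs_shift (eta : nat -> 'I_N -> R) : k \notin C ->
  @observation R N e sigma C th0' (fun t i => eta t i + sh t i) = @observation R N e sigma C th0 eta.
Proof.
move=> kC; apply/funext => t; apply/funext => -[[i|[j hj]]|[j hj]] /=.
- exact: msg_shift.
- rewrite theta_shift /sh; case: eqP => [ejk|]; last by rewrite subr0.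
  by move: kC; rewrite -ejk hj.
- rewrite /yval; congr (_ * _); apply: eq_bigr => l _; exact: msg_shift.
Qed.

End Shift.

Section Geo.
Context {R : realType}.

Lemma geo_iota (r : R) m : 0 <= r < 1 -> \sum_(t <- iota 0 m) r ^+ t <= (1 - r)^-1.
Proof.
move=> /andP[r0 r1].
have e : (1 - r) * \sum_(t <- iota 0 m) r ^+ t = 1 - r ^+ m.
  elim: m => [|m IH]; first by rewrite big_nil expr0; ring.
  rewrite -addn1 iotaD big_cat big_seq1 /= mulrDr IH add0n addn1 exprS; ring.
have r1' : 0 < 1 - r by rewrite subr_gt0.
rewrite -[X in X <= _](mulKf (lt0r_neq0 r1')) e.
rewrite ler_pdivrMl // mulrV ?unitfE ?lt0r_neq0 //.
by rewrite lerBlDr lerDl exprn_ge0.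
Qed.

Lemma geo_uniq (r : R) (T : seq nat) : 0 <= r < 1 -> uniq T ->
  \sum_(t <- T) r ^+ t <= (1 - r)^-1.
Proof.
move=> hr uT; set m := (\max_(t <- T) t).+1.
have hT : {subset T <= iota 0 m}.
  move=> t tT; rewrite mem_iota add0n /= ltnS; exact: leq_bigmax_seq.
have pe : perm_eq T [seq t <- iota 0 m | t \in T].
  apply: uniq_perm => //; first by rewrite filter_uniq // iota_uniq.
  by move=> t; rewrite mem_filter; case tT: (t \in T) => //=; rewrite hT.
rewrite (perm_big _ pe) big_filter big_mkcond.
apply: (le_trans _ (geo_iota r m hr)); apply: ler_sum => t _.
case: ifP => _ //; case/andP: hr => r0 _; exact: exprn_ge0.
Qed.

End Geo.

Lemma sumb_main {R : realType} (N : nat) (sigma : 'I_N -> R) (c q : R) (k : 'I_N) (D delta : R)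
  (S : seq (nat * 'I_N)) :
  (forall i, 0 < sigma i < 1) -> 0 < c -> 1 - sigma_min sigma < q < 1 -> `|D| <= delta -> uniq S ->
  \sum_(u <- S) `|(if u.2 == k then (1 - sigma k) ^+ u.1 * D else 0)| / (c * q ^+ u.1)
   <= q / (c * (q + sigma_min sigma - 1)) * delta.
Proof.
move=> hs c0 /andP[hq1 hq2] hD uS.
have smk : sigma_min sigma <= sigma k by exact: bigmin_le.
have hsk := hs k; case/andP: hsk => sk0 sk1.
have q0 : 0 < q.
  have : 0 < 1 - sigma_min sigma by lra.
  move=> h; lra.
set r := (1 - sigma k) / q.
set M := `|D| / c.
have eqt u : `|(if u.2 == k then (1 - sigma k) ^+ u.1 * D else 0)| / (c * q ^+ u.1) =
    if u.2 == k then r ^+ u.1 * M else 0.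
  case: eqP => _; last by rewrite normr0 mul0r.
  rewrite normrM normrX (ger0_norm (_ : 0 <= 1 - sigma k)); last by lra.
  rewrite /r /M expr_div_n; field.
  by rewrite expf_neq0 ?lt0r_neq0 // lt0r_neq0.
rewrite (eq_bigr _ (fun u _ => eqt u)) -big_mkcond /= -big_filter.
rewrite -(big_map fst xpredT (fun t => r ^+ t * M)) -big_distrl /=.
have hr : 0 <= r < 1.
  apply/andP; split; first by rewrite /r divr_ge0 //; lra.
  by rewrite /r ltr_pdivrMr //; lra.
have uT : uniq (map fst [seq u <- S | u.2 == k]).
  rewrite map_inj_in_uniq ?filter_uniq //.
  move=> [t1 i1] [t2 i2]; rewrite !mem_filter /= => /andP[/eqP -> _] /andP[/eqP -> _] ->.
  by [].
have M0 : 0 <= M by rewrite /M divr_ge0 // ltW.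
apply: (le_trans (ler_wpM2r M0 (geo_uniq _ _ hr uT))).
set x := q + sigma_min sigma - 1.
have x0 : 0 < x by rewrite /x; lra.
have -> : (1 - r)^-1 * M = q * `|D| / (c * (q - 1 + sigma k)).
  rewrite /r /M; field; apply/andP; split; rewrite ?lt0r_neq0 //; lra.
have y0 : 0 < c * (q - 1 + sigma k) by rewrite mulr_gt0 //; lra.
rewrite ler_pdivrMr //.
have -> : q / (c * x) * delta * (c * (q - 1 + sigma k)) = q * delta * (q - 1 + sigma k) / x.
  by field; apply/andP; split; rewrite lt0r_neq0.
rewrite ler_pdivlMr //.
have hDn : 0 <= `|D| by [].
have : x <= q - 1 + sigma k by rewrite /x; lra.
move=> hxy.
have h1 : q * `|D| * x <= q * delta * x by rewrite ler_pM2r // ler_pM2l.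
have d0 : 0 <= delta by exact: le_trans hDn hD.
have h2 : q * delta * x <= q * delta * (q - 1 + sigma k) by rewrite ler_wpM2l // mulr_ge0 // ltW.
lra.
Qed.

Section Meas.
Context {R : realType} (N : nat) (e : rel 'I_N) (sigma : 'I_N -> R) (C : {set 'I_N}) (th0 : 'I_N -> R).
Local Notation U := (nat * 'I_N)%type.
Local Notation MT := (g_sigma_algebraType (@G0 R U : set (set (U -> R^o)))).

Lemma mcoord (u : U) : measurable_fun (setT : set MT) (fun f : MT => f u).
Proof.
move=> _ A mA; rewrite setTI; apply: sub_gen_smallest.
by exists u, A.
Qed.

Lemma msum_in (A : {set 'I_N}) (h : 'I_N -> MT -> R) :
  (forall j, measurable_fun setT (h j)) -> measurable_fun setT (fun x => \sum_(j in A) h j x).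
Proof.
move=> mh.
suff -> : (fun x => \sum_(j in A) h j x) = (fun x => \sum_(j <- enum A) h j x).
  exact: measurable_sum.
by apply/funext => x; rewrite big_enum.
Qed.

Lemma mtheta t i : measurable_fun (setT : set MT)
  (fun f : MT => theta e sigma th0 (fun t i => f (t, i)) t i).
Proof.
elim: t i => [|t IH] i /=; first exact: measurable_cst.
apply: measurable_funD; apply: measurable_funM; try exact: measurable_cst.
  exact: IH.
rewrite /yval; apply: measurable_funM; first exact: measurable_cst.
apply: msum_in => j; rewrite /msg; apply: measurable_funD; first exact: IH.
exact: (mcoord (t, j)).
Qed.

Lemma mobs t a : measurable_fun (setT : set MT)
  (fun f : MT => @observation R N e sigma C th0 (fun t i => f (t, i)) t a).
Proof.
case: a => [[i|j]|j] /=.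
- rewrite /msg; apply: measurable_funD; first exact: mtheta.
  exact: (mcoord (t, i)).
- exact: mtheta.
- rewrite /yval; apply: measurable_funM; first exact: measurable_cst.
  apply: msum_in => l; rewrite /msg; apply: measurable_funD; first exact: mtheta.
  exact: (mcoord (t, l)).
Qed.

Lemma Bmeas (Obs : set (nat -> obs_index C -> R)) : obs_measurable Obs ->
  <<s @G0 R U>> [set f : U -> R | Obs (@observation R N e sigma C th0 (fun t i => f (t, i)))].
Proof.
move=> hObs.
pose Fm (f : MT) := @observation R N e sigma C th0 (fun t i => f (t, i)).
pose H := [set O : set (nat -> obs_index C -> R) | measurable (Fm @^-1` O)].
have sH : sigma_algebra setT H.
  split.
  - by rewrite /H /= preimage_set0; exact: measurable0.
  - move=> A HA; rewrite /H /= setTD preimage_setC.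
    exact: measurableC.
  - move=> A HA; rewrite /H /= preimage_bigcup; exact: bigcupT_measurable.
have cH : @cylinder_gen R (obs_index C) `<=` H.
  move=> _ [t [a [A [mA ->]]]].
  have := mobs t a measurableT A mA; rewrite setTI; exact.
have hH : H Obs by apply: hObs; split.
exact: hH.
Qed.

End Meas.

Theorem mainTheorem5 (R : realType) (N : nat) (e : rel 'I_N)
  (sigma : 'I_N -> R) (c q : R) (C : {set 'I_N})
  (d : measure_display) (T : measurableType d) (P : probability T R)
  (eta : nat -> 'I_N -> T -> R) :
  undirected_graph e ->
  (forall i, 0 < sigma i < 1) ->
  0 < c ->
  1 - sigma_min sigma < q < 1 ->
  (forall t i, measurable_fun setT (eta t i)) ->
  mutually_independent P (fun k : nat * 'I_N => eta k.1 k.2) ->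
  (forall t i (B : set R), measurable B ->
     P (eta t i @^-1` B) = laplace_law (c * q ^+ t) B) ->
  let eps := q / (c * (q + sigma_min sigma - 1)) in
  forall (delta : R) (th0 th0' : 'I_N -> R) (k : 'I_N),
    0 <= delta ->
    k \notin C ->
    (forall i, i != k -> th0 i = th0' i) ->
    `|th0 k - th0' k| <= delta ->
    forall Obs : set (nat -> obs_index C -> R),
      obs_measurable Obs ->
      (P [set w | Obs (@observation R N e sigma C th0 (fun t i => eta t i w))]
       <= (expR (eps * delta))%:E *
          P [set w | Obs (@observation R N e sigma C th0' (fun t i => eta t i w))])%E.
Proof.
move=> _ hs c0 hq meta indep law eps delta th0 th0' k d0 kC hth hD Obs hObs.
pose etaU : (nat * 'I_N) -> T -> R := fun u => eta u.1 u.2.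
pose bU (u : nat * 'I_N) := c * q ^+ u.1.
pose sU (u : nat * 'I_N) := sh N sigma th0 th0' k u.1 u.2.
have q0 : 0 < q.
  case/andP: hq => h1 h2.
  have : sigma_min sigma <= 1 by exact: bigmin_le_id.
  move=> h; lra.
have meta' : forall u, measurable_fun setT (etaU u) by move=> u; exact: meta.
have law' : forall u (B : set R), measurable B -> P (etaU u @^-1` B) = laplace_law (bU u) B.
  by move=> u B mB; exact: law.
have bpos : forall u, 0 < bU u by move=> u; rewrite /bU mulr_gt0 // exprn_gt0.
have sumb : forall S, uniq S -> \sum_(u <- S) `|sU u| / bU u <= eps * delta.
  by move=> S uS; exact: (sumb_main _ _ _ _ _ _ _ _ hs c0 hq hD uS).
have hB := Bmeas _ e sigma C th0' _ hObs.
have := @core _ _ _ P _ etaU bU sU (eps * delta) meta' indep law' bpos sumb _ hB.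
congr (P _ <= _ * P _)%E.
apply/seteqP; split => w /=; rewrite /Zs /etaU /sU /=;
  by rewrite (obs_shift N e sigma C th0 th0' k hth (fun t i => eta t i w) kC).
Qed.
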